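(* Let $\Bbbk$ be a field of characteristic $\neq2$ and $L$ a Lie tri-algebra over $\Bbbk$. Let $L_0=\mathrm{span}\{[a\vdash b]-[a\dashv b],\ [a\vdash b]-[a\perp b]\mid a,b\in L\}$, and let $X=X_0\cup X_1$ (disjoint union) be a linearly ordered basis of $L$ such that $X_0$ is a basis of $L_0$. For $x,y\in X$ let $\mu_\dashv(x,y)$ and $\mu_\perp(x,y)$ denote $[x\dashv y]$ and $[x\perp y]$ written as linear combinations of $X$, and for $\mu=\sum_i\alpha_i z_i$ ($z_i\in X$) put $\dot\mu=\sum_i\alpha_i\dot z_i$. In the free associative algebra $\mathrm{As}\langle X\cup\dot X\rangle$, where $\dot X=\{\dot x\mid x\in X\}$ is a disjoint copy of $X$, order $X\cup\dot X$ by extending the order of $X$ via: $x>y\Rightarrow\dot x>\dot y$, and $\dot x>y$ for all $x,y\in X$; order words by deg-lex order. Then the set of polynomials $$x\ (x\in X_0);\qquad xy-yx-\mu_\dashv(x,y)\ (x,y\in X_1,\ x>y);$$ $$\dot xy-y\dot x-\dot\mu_\dashv(x,y)\ (x\in X,\ y\in X_1);\qquad \dot x\dot y-\dot y\dot x-\dot\mu_\perp(x,y)\ (x,y\in X,\ x>y)$$ is a Gröbner–Shirshov basis in $\mathrm{As}\langle X\cup\dot X\rangle$.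
   Context: A Lie tri-algebra is a vector space with bilinear operations $[\cdot\vdash\cdot]$, $[\cdot\dashv\cdot]$, $[\cdot\perp\cdot]$ such that $[a\dashv b]=-[b\vdash a]$, $[a\perp b]=-[b\perp a]$, $[[x_1\vdash x_2]\vdash x_3]-[x_1\vdash[x_2\vdash x_3]]+[x_2\vdash[x_1\vdash x_3]]=0$, $[[x_1\perp x_2]\vdash x_3]=[[x_1\vdash x_2]\vdash x_3]$, $[[x_1\vdash x_2]\perp x_3]-[x_1\vdash[x_2\perp x_3]]-[[x_1\vdash x_3]\perp x_2]=0$, and $[[x_1\perp x_2]\perp x_3]+[[x_2\perp x_3]\perp x_1]+[[x_3\perp x_1]\perp x_2]=0$. Gröbner–Shirshov basis (associative case): deg-lex order compares words first by length, then lexicographically. For a nonzero polynomial $f$, $\bar f$ is its largest word; $f$ is monic if $\bar f$ has coefficient 1 (all listed polynomials are monic with leading words $x$, $xy$, $\dot xy$, $\dot x\dot y$ respectively). For monic $f,g$: if $\bar f=u\bar g u'$ the composition of inclusion is $(f,g)_w=f-ugu'$ with $w=\bar f$; if $\bar f=uu'$, $\bar g=u'u''$ with $u'$ nonempty and $u,u''$ nonempty, the composition of intersection is $(f,g)_w=fu''-ug$ with $w=uu'u''$. A set $S$ of monic polynomials is a Gröbner–Shirshov basis if every composition $(f,g)_w$ of elements $f,g\in S$ can be written as $\sum_i\alpha_i u_is_iu_i'$ with $s_i\in S$, $\alpha_i\in\Bbbk$, words $u_i,u_i'$, and $u_i\bar s_iu_i'<w$. *)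

(* Defs.v *)
From mathcomp Require Import all_boot all_order all_algebra.
Set Implicit Arguments. Unset Strict Implicit. Unset Printing Implicit Defensive.
Import Order.TTheory GRing.Theory.
Local Open Scope ring_scope.

Fixpoint allP {T : Type} (P : T -> Prop) (s : seq T) : Prop :=
  match s with [::] => True | x :: s' => P x /\ allP P s' end.

Section LieTri.
Variables (k : fieldType) (L : lmodType k).

Definition bilinear (op : L -> L -> L) : Prop :=
  (forall (a : k) x y z, op (a *: x + y) z = a *: op x z + op y z) /\
  (forall (a : k) x y z, op z (a *: x + y) = a *: op z x + op z y).

(* vd = [. |- .], dv = [. -| .], pp = [. _|_ .] *)
Definition is_lie_trialgebra (vd dv pp : L -> L -> L) : Prop :=
  [/\ bilinear vd, bilinear dv & bilinear pp] /\
  [/\ (forall a b, dv a b = - vd b a),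
      (forall a b, pp a b = - pp b a) &
      (forall x1 x2 x3, vd (vd x1 x2) x3 - vd x1 (vd x2 x3) + vd x2 (vd x1 x3) = 0)] /\
  [/\ (forall x1 x2 x3, vd (pp x1 x2) x3 = vd (vd x1 x2) x3),
      (forall x1 x2 x3, pp (vd x1 x2) x3 - vd x1 (pp x2 x3) - pp (vd x1 x3) x2 = 0) &
      (forall x1 x2 x3, pp (pp x1 x2) x3 + pp (pp x2 x3) x1 + pp (pp x3 x1) x2 = 0)].

Definition in_L0 (vd dv pp : L -> L -> L) (v : L) : Prop :=
  exists s : seq (k * k * L * L),
    v = \sum_(t <- s) (t.1.1.1 *: (vd t.1.2 t.2 - dv t.1.2 t.2)
                       + t.1.1.2 *: (vd t.1.2 t.2 - pp t.1.2 t.2)).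

Variable (X : eqType) (e : X -> L).

Definition is_basis_of (P : L -> Prop) (B : pred X) : Prop :=
  [/\ (forall x, B x -> P (e x)),
      (forall (s : seq X) (c : X -> k), uniq s -> all B s ->
          \sum_(z <- s) c z *: e z = 0 -> forall z, z \in s -> c z = 0) &
      (forall v, P v -> exists (s : seq X) (c : X -> k),
          all B s /\ v = \sum_(z <- s) c z *: e z)].

Definition coords (c : X -> k) (v : L) : Prop :=
  exists s : seq X, [/\ uniq s, (forall z, z \notin s -> c z = 0) &
                        v = \sum_(z <- s) c z *: e z].
End LieTri.

Section FreeAs.
Variables (k : fieldType) (d : Order.disp_t) (X : orderType d).

(* letters: inl x = x, inr x = xdot *)
Definition letter := (X + X)%type.
Definition word := seq letter.
Definition poly := word -> k.

Definition letter_lt (a b : letter) : bool :=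
  match a, b with
  | inl x, inl y => (x < y)%O
  | inr x, inr y => (x < y)%O
  | inl _, inr _ => true
  | inr _, inl _ => false
  end.

Fixpoint lexlt (u v : word) : bool :=
  match u, v with
  | a :: u', b :: v' => letter_lt a b || ((a == b) && lexlt u' v')
  | _, _ => false
  end.

Definition wlt (u v : word) : bool :=
  (size u < size v)%N || ((size u == size v) && lexlt u v).

Definition padd (f g : poly) : poly := fun w => f w + g w.
Definition psub (f g : poly) : poly := fun w => f w - g w.
Definition pword (u : word) : poly := fun w => (w == u)%:R.
(* u * f * u' for words u, u' *)
Definition pmulw (u : word) (f : poly) (u' : word) : poly := fun w =>
  if [&& (size u + size u' <= size w)%N, take (size u) w == u &
         drop (size w - size u') w == u']
  then f (drop (size u) (take (size w - size u') w)) else 0.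

(* mu = sum_z c z z (dot = false) or mudot = sum_z c z zdot (dot = true) *)
Definition plin (dot : bool) (c : X -> k) : poly := fun w =>
  match w with
  | [:: inl z] => if dot then 0 else c z
  | [:: inr z] => if dot then c z else 0
  | _ => 0
  end.

Definition lead (f : poly) (w : word) : Prop :=
  f w != 0 /\ (forall w', f w' != 0 -> w' = w \/ wlt w' w).
Definition monic (f : poly) : Prop := exists w, lead f w /\ f w = 1.

Record summand := Summand { s_coef : k; s_left : word; s_poly : poly;
                            s_lead : word; s_right : word }.

Definition trivial_mod (S : poly -> Prop) (h : poly) (w : word) : Prop :=
  exists l : seq summand,
    allP (fun t => [/\ S (s_poly t), lead (s_poly t) (s_lead t) &
                      wlt (s_left t ++ s_lead t ++ s_right t) w]) l /\
    h = (fun v => \sum_(t <- l) s_coef t * pmulw (s_left t) (s_poly t) (s_right t) v).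

Definition is_GSB (S : poly -> Prop) : Prop :=
  (forall f, S f -> monic f) /\
  (forall f g wf wg, S f -> S g -> lead f wf -> lead g wg ->
     (forall u u', wf = u ++ wg ++ u' ->
        trivial_mod S (psub f (pmulw u g u')) wf) /\
     (forall a b c, a != [::] -> b != [::] -> c != [::] ->
        wf = a ++ b -> wg = b ++ c ->
        trivial_mod S (psub (pmulw [::] f c) (pmulw a g [::])) (a ++ b ++ c))).
End FreeAs.

Definition thm_set (k : fieldType) (L : lmodType k) (dv pp : L -> L -> L)
  (d : Order.disp_t) (X : orderType d) (e : X -> L) (X0 : pred X)
  (f : poly k X) : Prop :=
  let X1 := fun x => ~~ X0 x in
  (exists x, X0 x /\ f = pword k [:: inl x])
  \/ (exists x y (c : X -> k), [/\ X1 x, X1 y, (y < x)%O, coords e c (dv (e x) (e y)) &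
        f = psub (psub (pword k [:: inl x; inl y]) (pword k [:: inl y; inl x]))
                 (plin false c)])
  \/ (exists x y (c : X -> k), [/\ X1 y, coords e c (dv (e x) (e y)) &
        f = psub (psub (pword k [:: inr x; inl y]) (pword k [:: inl y; inr x]))
                 (plin true c)])
  \/ (exists x y (c : X -> k), [/\ (y < x)%O, coords e c (pp (e x) (e y)) &
        f = psub (psub (pword k [:: inr x; inr y]) (pword k [:: inr y; inr x]))
                 (plin true c)]).

(* Main.v *)
Require Import Defs.
From mathcomp Require Import all_boot all_order all_algebra.
From mathcomp Require Import ring zify.
From Stdlib Require Import Lia.
From Stdlib Require Import FunctionalExtensionality ClassicalEpsilon.
Import Order.TTheory GRing.Theory.
Import Defs.
Set Implicit Arguments. Unset Strict Implicit. Unset Printing Implicit Defensive.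
Local Open Scope ring_scope.

Section Words.
Variables (k : fieldType) (d : Order.disp_t) (X : orderType d).
Notation letter := (letter X).
Notation word := (word X).
Notation P := (Defs.poly k X).

Lemma letter_ltxx (a : letter) : letter_lt a a = false.
Proof. by case: a => x /=; rewrite Order.POrderTheory.ltxx. Qed.

Lemma letter_lt_asym (a b : letter) : letter_lt a b -> letter_lt b a -> False.
Proof.
case: a => x; case: b => y //= h1 h2;
by have := Order.POrderTheory.lt_trans h1 h2; rewrite Order.POrderTheory.ltxx.
Qed.

Lemma letter_lt_trans (a b c : letter) : letter_lt a b -> letter_lt b c -> letter_lt a c.
Proof.
case: a => x; case: b => y; case: c => z //=; exact: Order.POrderTheory.lt_trans.
Qed.

Lemma lexlt_asym (u v : word) : lexlt u v -> lexlt v u -> False.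
Proof.
elim: u v => [|a u IH] [|b v] //=.
case/orP => [h1|/andP[/eqP eab h1]]; case/orP => [h2|/andP[/eqP eba h2]].
- exact: letter_lt_asym h1 h2.
- by subst; rewrite letter_ltxx in h1.
- by subst; rewrite letter_ltxx in h2.
- exact: IH h1 h2.
Qed.

Lemma wlt_asym (u v : word) : wlt u v -> wlt v u -> False.
Proof.
rewrite /wlt; case/orP => [h1|/andP[/eqP e1 h1]]; case/orP => [h2|/andP[/eqP e2 h2]].
- by have := ltn_trans h1 h2; rewrite ltnn.
- by rewrite e2 ltnn in h1.
- by rewrite e1 ltnn in h2.
- exact: lexlt_asym h1 h2.
Qed.

Lemma lead_uniq (f : P) w1 w2 : lead f w1 -> lead f w2 -> w1 = w2.
Proof.
move=> [n1 h1] [n2 h2].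
case: (h1 _ n2) => [->//|l21]; case: (h2 _ n1) => [->//|l12].
by case: (wlt_asym l21 l12).
Qed.

Lemma pmulw_sub (u : word) (f g : P) u' v :
  pmulw u (psub f g) u' v = pmulw u f u' v - pmulw u g u' v.
Proof. by rewrite /pmulw /psub; case: ifP => _ //; rewrite subr0. Qed.

Lemma pmulw_word (u m u' v : word) : pmulw u (pword k m) u' v = pword k (u ++ m ++ u') v.
Proof.
rewrite /pmulw /pword.
have [->|neq] := eqVneq v (u ++ m ++ u').
  rewrite !size_cat take_size_cat // eqxx.
  have -> : (size u + (size m + size u') - size u' = size u + size m)%N.
    by rewrite addnA addnK.
  rewrite addnA leq_add2r leq_addr catA drop_size_cat ?size_cat // eqxx /=.
  by rewrite take_size_cat ?size_cat // drop_size_cat // eqxx.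
case: ifP => // /and3P[hs /eqP ht /eqP hd].
case: eqP => // hm; case/eqP: neq.
rewrite -[v in LHS](cat_take_drop (size v - size u')) hd.
rewrite -[take _ v](cat_take_drop (size u)) take_takel ?ht ?hm ?catA //.
by rewrite leq_subRL ?(leq_trans (leq_addl _ _) hs) // addnC.
Qed.

Lemma pmulw_nil (f : P) v : pmulw [::] f [::] v = f v.
Proof. by rewrite /pmulw /= subn0 take_size drop_size take0 drop0. Qed.

Lemma pmulw_sum (I : Type) (r : seq I) (a : I -> k) (F : I -> P) u u' v :
  pmulw u (fun w => \sum_(i <- r) a i * F i w) u' v = \sum_(i <- r) a i * pmulw u (F i) u' v.
Proof. rewrite /pmulw; case: ifP => _ //; by rewrite big1 // => i _; rewrite mulr0. Qed.

Definition Ld (dot : bool) (z : X) : letter := if dot then inr z else inl z.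
Definition isr (a : letter) : bool := if a is inr _ then true else false.
Definition base (a : letter) : X := match a with inl z => z | inr z => z end.

Lemma sum_delta (s : seq X) (c : X -> k) z0 : uniq s -> (z0 \notin s -> c z0 = 0) ->
  \sum_(z <- s) c z * (z == z0)%:R = c z0.
Proof.
move=> us hout; case: (boolP (z0 \in s)) => hin.
  rewrite (bigD1_seq z0) //= eqxx mulr1 big1 ?addr0 // => i /negPf ->; by rewrite mulr0.
rewrite hout // big1_seq // => i /andP[_ hi]; case: eqP => [ei|_]; last by rewrite mulr0.
by subst; rewrite hi in hin.
Qed.

Lemma plin_sum dot (c : X -> k) (s : seq X) v : uniq s -> (forall z, z \notin s -> c z = 0) ->
  plin dot c v = \sum_(z <- s) c z * pword k [:: Ld dot z] v.
Proof.
move=> us hout; rewrite /pword.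
case: v => [|a [|b v]] /=.
- by rewrite big1 // => i _; rewrite mulr0.
- case: a => z0; case: dot => /=.
  + by rewrite big1 // => i _; rewrite mulr0.
  + rewrite -(@sum_delta s c z0 us) //; last exact: hout.
    apply: eq_bigr => i _; rewrite eqseq_cons andbT; congr (_ * _%:R).
    by rewrite eq_sym.
  + rewrite -(@sum_delta s c z0 us) //; last exact: hout.
    apply: eq_bigr => i _; rewrite eqseq_cons andbT; congr (_ * _%:R).
    by rewrite eq_sym.
  + by rewrite big1 // => i _; rewrite mulr0.
- rewrite big1; first by case: a.
  by move=> i _; rewrite eqseq_cons /= andbF mulr0.
Qed.

Lemma plin_lin dot (I : Type) (r : seq I) (a : I -> k) (g : I -> X -> k) v :
  plin dot (fun t => \sum_(i <- r) a i * g i t) v = \sum_(i <- r) a i * plin dot (g i) v.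
Proof.
case: v => [|[] z [|b v]] /=; try case: dot => //; by rewrite big1 // => i _; rewrite mulr0.
Qed.

Lemma plin_ext dot (c c' : X -> k) v : (forall t, c t = c' t) -> plin dot c v = plin dot c' v.
Proof. by move=> h; case: v => [|[] z [|]] //=; case: dot. Qed.

Lemma plin_add dot (c c' : X -> k) v : plin dot (fun t => c t + c' t) v = plin dot c v + plin dot c' v.
Proof. by case: v => [|[] z [|]] //=; case: dot => //; rewrite addr0. Qed.

Lemma plin_opp dot (c : X -> k) v : plin dot (fun t => - c t) v = - plin dot c v.
Proof. by case: v => [|[] z [|]] //=; case: dot => //; rewrite oppr0. Qed.

Lemma plin0 dot (c : X -> k) v : (forall t, c t = 0) -> plin dot c v = 0.
Proof. by move=> h; case: v => [|[] z [|]] //=; case: dot. Qed.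

Section TM.
Variables (S : P -> Prop) (w : word).
Notation tm f := (trivial_mod S f w).

Lemma tmE (f g : P) : (forall v, f v = g v) -> tm f -> tm g.
Proof. by move=> h; rewrite (functional_extensionality f g h). Qed.

Lemma tm0 : tm (fun _ => 0).
Proof. by exists [::]; split => //; apply: functional_extensionality => v; rewrite big_nil. Qed.

Lemma tm0' (f : P) : (forall v, f v = 0) -> tm f.
Proof. by move=> h; apply: tmE tm0 => v; rewrite h. Qed.

Lemma allP_cat (T : Type) (Q : T -> Prop) s1 s2 : allP Q s1 -> allP Q s2 -> allP Q (s1 ++ s2).
Proof. by elim: s1 => //= a s IH [h1 h2] h3; split => //; apply: IH. Qed.

Lemma allP_map (T : Type) (Q : T -> Prop) (fm : T -> T) s :
  (forall t, Q t -> Q (fm t)) -> allP Q s -> allP Q (map fm s).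
Proof. by move=> hm; elim: s => //= a s IH [h1 h2]; split; [apply: hm|apply: IH]. Qed.

Lemma tmD (f g : P) : tm f -> tm g -> tm (fun v => f v + g v).
Proof.
move=> [l1 [a1 ->]] [l2 [a2 ->]]; exists (l1 ++ l2); split; first exact: allP_cat.
by apply: functional_extensionality => v; rewrite big_cat.
Qed.

Lemma tmZ a (f : P) : tm f -> tm (fun v => a * f v).
Proof.
move=> [l [al ->]].
exists (map (fun t => Summand (a * s_coef t) (s_left t) (s_poly t) (s_lead t) (s_right t)) l).
split; first by apply: allP_map al => t.
apply: functional_extensionality => v; rewrite big_map mulr_sumr.
by apply: eq_bigr => t _; rewrite /= mulrA.
Qed.

Lemma tmN (f : P) : tm f -> tm (fun v => - f v).
Proof. by move=> h; apply: tmE (tmZ (-1) h) => v; rewrite mulN1r. Qed.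

Lemma tmB (f g : P) : tm f -> tm g -> tm (fun v => f v - g v).
Proof. by move=> hf hg; apply: tmD hf (tmN hg). Qed.

Lemma tm_sum (I : Type) (r : seq I) (a : I -> k) (F : I -> P) :
  (forall i, tm (F i)) -> tm (fun v => \sum_(i <- r) a i * F i v).
Proof.
move=> h; elim: r => [|i r IH]; first by apply: tm0' => v; rewrite big_nil.
apply: tmE (tmD (tmZ (a i) (h i)) IH) => v; by rewrite big_cons.
Qed.

Lemma tm1 (f : P) lf u u' : S f -> lead f lf -> wlt (u ++ lf ++ u') w -> tm (pmulw u f u').
Proof.
move=> Sf lfl hw; exists [:: Summand 1 u f lf u']; split => /=; first by [].
by apply: functional_extensionality => v; rewrite big_seq1 mul1r.
Qed.
End TM.

Definition R (p q : letter) (m : P) : P :=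
  psub (psub (pword k [:: p; q]) (pword k [:: q; p])) m.

Lemma gen_identity (A B C : letter) (mAB mAC mBC : P) v :
  psub (pmulw [::] (R A B mAB) [:: C]) (pmulw [:: A] (R B C mBC) [::]) v =
  pmulw [::] (R A C mAC) [:: B] v + pmulw [:: C] (R A B mAB) [::] v
  - pmulw [:: B] (R A C mAC) [::] v - pmulw [::] (R B C mBC) [:: A] v
  + ((pmulw [:: A] mBC [::] v - pmulw [::] mBC [:: A] v)
     + (pmulw [::] mAC [:: B] v - pmulw [:: B] mAC [::] v)
     + (pmulw [:: C] mAB [::] v - pmulw [::] mAB [:: C] v)).
Proof.
rewrite /R /psub !pmulw_sub !pmulw_word /=.
rewrite /psub /=. ring.
Qed.

End Words.

Lemma sumrD' (V : zmodType) (I : Type) (r : seq I) (F G : I -> V) :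
  \sum_(i <- r) (F i + G i) = \sum_(i <- r) F i + \sum_(i <- r) G i.
Proof. exact: big_split. Qed.

Section Bil.
Variables (k : fieldType) (L : lmodType k) (op : L -> L -> L).
Hypothesis hb : bilinear op.

Lemma op0l z : op 0 z = 0.
Proof.
have := hb.1 1 0 0 z; rewrite !scale1r addr0 => h.
by have := congr1 (fun t => t - op 0 z) h; rewrite /= addrK subrr => /esym.
Qed.
Lemma op0r z : op z 0 = 0.
Proof.
have := hb.2 1 0 0 z; rewrite !scale1r addr0 => h.
by have := congr1 (fun t => t - op z 0) h; rewrite /= addrK subrr => /esym.
Qed.
Lemma opZl a x z : op (a *: x) z = a *: op x z.
Proof. by have := hb.1 a x 0 z; rewrite addr0 op0l addr0. Qed.
Lemma opZr a x z : op z (a *: x) = a *: op z x.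
Proof. by have := hb.2 a x 0 z; rewrite addr0 op0r addr0. Qed.
Lemma opDl x y z : op (x + y) z = op x z + op y z.
Proof. by have := hb.1 1 x y z; rewrite !scale1r. Qed.
Lemma opDr x y z : op z (x + y) = op z x + op z y.
Proof. by have := hb.2 1 x y z; rewrite !scale1r. Qed.
Lemma opNl x z : op (- x) z = - op x z.
Proof. by rewrite -scaleN1r opZl scaleN1r. Qed.
Lemma opNr x z : op z (- x) = - op z x.
Proof. by rewrite -scaleN1r opZr scaleN1r. Qed.
Lemma opBl x y z : op (x - y) z = op x z - op y z.
Proof. by rewrite opDl opNl. Qed.
Lemma opBr x y z : op z (x - y) = op z x - op z y.
Proof. by rewrite opDr opNr. Qed.
Lemma op_suml (I : Type) (r : seq I) (a : I -> k) (F : I -> L) z :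
  op (\sum_(i <- r) a i *: F i) z = \sum_(i <- r) a i *: op (F i) z.
Proof.
elim: r => [|i r IH]; first by rewrite !big_nil op0l.
by rewrite !big_cons opDl opZl IH.
Qed.
Lemma op_sumr (I : Type) (r : seq I) (a : I -> k) (F : I -> L) z :
  op z (\sum_(i <- r) a i *: F i) = \sum_(i <- r) a i *: op z (F i).
Proof.
elim: r => [|i r IH]; first by rewrite !big_nil op0r.
by rewrite !big_cons opDr opZr IH.
Qed.
End Bil.

Section Coords.
Variables (k : fieldType) (L : lmodType k) (vd dv pp : L -> L -> L)
  (d : Order.disp_t) (X : orderType d) (e : X -> L) (X0 : pred X).
Hypothesis hchar : (2%N \notin [pchar k]%R).
Hypothesis hlie : is_lie_trialgebra vd dv pp.
Hypothesis hB : is_basis_of e (fun _ => True) predT.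
Hypothesis hB0 : is_basis_of e (in_L0 vd dv pp) X0.

Lemma two_neq0 : (2%:R : k) != 0.
Proof. by move: hchar; rewrite inE /=. Qed.

Lemma indep (s : seq X) (c : X -> k) : uniq s -> \sum_(z <- s) c z *: e z = 0 ->
  forall z, z \in s -> c z = 0.
Proof. by case: hB => _ hi _ us hs; apply: hi => //; exact: all_predT. Qed.

Lemma sum_sup (V : zmodType) (s u : seq X) (F : X -> V) : uniq s -> uniq u ->
  {subset s <= u} -> (forall z, z \notin s -> F z = 0) ->
  \sum_(z <- u) F z = \sum_(z <- s) F z.
Proof.
move=> us uu ssu hout.
rewrite (bigID (fun z => z \in s)) /= [X in _ + X]big1 ?addr0; last by move=> z /hout.
rewrite -big_filter; apply: perm_big; apply: uniq_perm; rewrite ?filter_uniq //.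
by move=> z; rewrite mem_filter; apply/andP/idP => [[]//|h]; split => //; apply: ssu.
Qed.

Lemma coords_gen (s : seq X) (c : X -> k) : exists c', coords e c' (\sum_(z <- s) c z *: e z).
Proof.
elim: s => [|a s [c1 [t [ut hout ht]]]].
  by exists (fun _ => 0), [::]; split => //; rewrite !big_nil.
exists (fun y => c1 y + (y == a)%:R * c a), (undup (a :: t)); split.
- exact: undup_uniq.
- move=> y; rewrite mem_undup inE negb_or => /andP[/negPf -> /hout ->].
  by rewrite mul0r addr0.
- rewrite big_cons ht; symmetry.
  under eq_bigr => y _ do rewrite scalerDl.
  rewrite sumrD' addrC; congr (_ + _); last first.
    apply: sum_sup => //; [exact: undup_uniq| |by move=> y /hout ->; rewrite scale0r].
    by move=> y yt; rewrite mem_undup inE yt orbT.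
  rewrite (@sum_sup _ [:: a]) ?undup_uniq //.
  + by rewrite big_seq1 eqxx mul1r.
  + by move=> y; rewrite inE => /eqP ->; rewrite mem_undup inE eqxx.
  + by move=> y; rewrite inE => /negPf ->; rewrite mul0r scale0r.
Qed.

Lemma coords_exists (v : L) : exists c, coords e c v.
Proof. by case: hB => _ _ /(_ v I) [s [c [_ ->]]]; apply: coords_gen. Qed.

Definition coordf (v : L) : X -> k :=
  proj1_sig (constructive_indefinite_description _ (coords_exists v)).

Lemma coordfP v : coords e (coordf v) v.
Proof. by rewrite /coordf; case: constructive_indefinite_description. Qed.

Lemma coords_uniq c c' v : coords e c v -> coords e c' v -> forall z, c z = c' z.
Proof.
move=> [s [us hs ev]] [s' [us' hs' ev']] z.
set u := undup (s ++ s').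
have uu : uniq u by exact: undup_uniq.
have h : \sum_(y <- u) (c y - c' y) *: e y = 0.
  under eq_bigr => y _ do rewrite scalerBl.
  rewrite sumrB (@sum_sup _ s) // ?(@sum_sup _ s' u) // -?ev -?ev' ?subrr //.
  - by move=> y ys; rewrite mem_undup mem_cat ys orbT.
  - by move=> y /hs' ->; rewrite scale0r.
  - by move=> y ys; rewrite mem_undup mem_cat ys.
  - by move=> y /hs ->; rewrite scale0r.
case: (boolP (z \in u)) => zu.
  by apply/eqP; rewrite -subr_eq0; apply/eqP; apply: (indep uu h).
move: zu; rewrite mem_undup mem_cat negb_or => /andP[/hs -> /hs' ->] //.
Qed.

Lemma coordf_lin a v w z : coordf (a *: v + w) z = a * coordf v z + coordf w z.
Proof.
suff H : coords e (fun y => a * coordf v y + coordf w y) (a *: v + w).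
  exact: (coords_uniq (coordfP _) H z).
have [s [us hs ev]] := coordfP v; have [s' [us' hs' ev']] := coordfP w.
exists (undup (s ++ s')); split; first exact: undup_uniq.
  by move=> y; rewrite mem_undup mem_cat negb_or => /andP[/hs -> /hs' ->]; rewrite mulr0 addr0.
under eq_bigr => y _ do rewrite scalerDl -scalerA.
rewrite sumrD' -scaler_sumr.
rewrite (@sum_sup _ s) ?undup_uniq // ?(@sum_sup _ s' (undup (s ++ s'))) ?undup_uniq // -?ev -?ev' //.
- by move=> y ys; rewrite mem_undup mem_cat ys orbT.
- by move=> y /hs' ->; rewrite scale0r.
- by move=> y ys; rewrite mem_undup mem_cat ys.
- by move=> y /hs ->; rewrite scale0r.
Qed.

Lemma coordf0 z : coordf 0 z = 0.
Proof.
suff H : coords e (fun _ => 0) 0 by exact: (coords_uniq (coordfP _) H z).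
by exists [::]; split => //; rewrite big_nil.
Qed.
Lemma coordfD v w z : coordf (v + w) z = coordf v z + coordf w z.
Proof. by rewrite -[v]scale1r coordf_lin mul1r scale1r. Qed.
Lemma coordfZ a v z : coordf (a *: v) z = a * coordf v z.
Proof. by rewrite -[a *: v]addr0 coordf_lin coordf0 addr0. Qed.
Lemma coordfN v z : coordf (- v) z = - coordf v z.
Proof. by rewrite -scaleN1r coordfZ mulN1r. Qed.
Lemma coordf_sum (I : Type) (r : seq I) (a : I -> k) (F : I -> L) z :
  coordf (\sum_(i <- r) a i *: F i) z = \sum_(i <- r) a i * coordf (F i) z.
Proof.
elim: r => [|i r IH]; first by rewrite !big_nil coordf0.
by rewrite !big_cons coordf_lin IH.
Qed.
Lemma coordf_e t z : coordf (e t) z = (t == z)%:R.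
Proof.
suff H : coords e (fun y => (t == y)%:R) (e t) by exact: (coords_uniq (coordfP _) H z).
exists [:: t]; split => //.
  by move=> y; rewrite inE eq_sym => /negPf ->.
by rewrite big_seq1 eqxx scale1r.
Qed.

Lemma bvd : bilinear vd. Proof. by case: hlie => [[]]. Qed.
Lemma bdv : bilinear dv. Proof. by case: hlie => [[]]. Qed.
Lemma bpp : bilinear pp. Proof. by case: hlie => [[]]. Qed.
Lemma dvE a b : dv a b = - vd b a. Proof. by case: hlie => _ [[]]. Qed.
Lemma ppC a b : pp a b = - pp b a. Proof. by case: hlie => _ [[]]. Qed.
Lemma leib x1 x2 x3 : vd (vd x1 x2) x3 = vd x1 (vd x2 x3) - vd x2 (vd x1 x3).
Proof.
case: hlie => _ [[_ _ h] _]; move/eqP: (h x1 x2 x3).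
by rewrite -addrA addr_eq0 => /eqP ->; rewrite opprD opprK.
Qed.
Lemma vdpp x1 x2 x3 : vd (pp x1 x2) x3 = vd (vd x1 x2) x3.
Proof. by case: hlie => _ [_ [h _ _]]. Qed.
Lemma ppder x1 x2 x3 : pp (vd x1 x2) x3 - vd x1 (pp x2 x3) - pp (vd x1 x3) x2 = 0.
Proof. by case: hlie => _ [_ [_ h _]]. Qed.
Lemma ppjac x1 x2 x3 : pp (pp x1 x2) x3 + pp (pp x2 x3) x1 + pp (pp x3 x1) x2 = 0.
Proof. by case: hlie => _ [_ [_ _ h]]. Qed.

Notation L0 := (in_L0 vd dv pp).
Definition gen (t : k * k * L * L) : L :=
  t.1.1.1 *: (vd t.1.2 t.2 - dv t.1.2 t.2) + t.1.1.2 *: (vd t.1.2 t.2 - pp t.1.2 t.2).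

Lemma L0_0 : L0 0.
Proof. by exists [::]; rewrite big_nil. Qed.
Lemma L0_D u v : L0 u -> L0 v -> L0 (u + v).
Proof. by move=> [s1 ->] [s2 ->]; exists (s1 ++ s2); rewrite big_cat. Qed.
Lemma L0_Z a u : L0 u -> L0 (a *: u).
Proof.
move=> [s ->]; exists (map (fun t => (a * t.1.1.1, a * t.1.1.2, t.1.2, t.2)) s).
rewrite big_map scaler_sumr; apply: eq_bigr => t _ /=.
by rewrite scalerDr !scalerA.
Qed.
Lemma L0_N u : L0 u -> L0 (- u).
Proof. by move=> h; rewrite -scaleN1r; apply: L0_Z. Qed.
Lemma L0_g1 p q : L0 (vd p q - dv p q).
Proof. by exists [:: (1, 0, p, q)]; rewrite big_seq1 /= scale1r scale0r addr0. Qed.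
Lemma L0_e z : X0 z -> L0 (e z).
Proof. by case: hB0 => h _ _; apply: h. Qed.

Lemma L0_ind (Q : L -> Prop) : Q 0 -> (forall u v, Q u -> Q v -> Q (u + v)) ->
  (forall t, Q (gen t)) -> forall l, L0 l -> Q l.
Proof.
move=> h0 hD hg l [s ->]; elim: s => [|t s IH]; first by rewrite big_nil.
by rewrite big_cons; apply: hD => //; apply: hg.
Qed.

Lemma vd_L0l l b : L0 l -> vd l b = 0.
Proof.
move=> hl; apply: (L0_ind (Q := fun l => vd l b = 0)) hl.
- exact: (op0l bvd).
- by move=> u v hu hv; rewrite (opDl bvd) hu hv addr0.
move=> [[[a1 a2] p] q] /=; rewrite /gen /=.
rewrite (opDl bvd) !(opZl bvd) !(opBl bvd) vdpp subrr scaler0 addr0.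
rewrite dvE (opNl bvd) opprK !leib.
by rewrite addrA subrK subrr scaler0.
Qed.

Lemma dv_L0r a l : L0 l -> dv a l = 0.
Proof. by move=> hl; rewrite dvE vd_L0l ?oppr0. Qed.

Lemma dv_L0l l b : L0 l -> L0 (dv l b).
Proof.
move=> hl; have -> : dv l b = - (vd l b - dv l b) by rewrite vd_L0l // sub0r opprK.
exact/L0_N/L0_g1.
Qed.

Lemma dv_sym a b : L0 (dv a b + dv b a).
Proof.
have -> : dv a b + dv b a = - (vd a b - dv a b) by rewrite opprB addrC (dvE b a) addrC.
exact/L0_N/L0_g1.
Qed.

Lemma dv_aa a : L0 (dv a a).
Proof.
have -> : dv a a = (2%:R)^-1 *: (dv a a + dv a a).
  by rewrite -mulr2n -scaler_nat scalerA mulVf ?two_neq0 // scale1r.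
exact/L0_Z/dv_sym.
Qed.

Lemma pp_aa a : pp a a = 0.
Proof.
have h : (2%:R : k) *: pp a a = 0.
  by rewrite scaler_nat mulr2n {1}ppC addNr.
by rewrite -[pp a a]scale1r -(mulVf two_neq0) -scalerA h scaler0.
Qed.

Lemma L0_coord l z : L0 l -> ~~ X0 z -> coordf l z = 0.
Proof.
case: hB0 => _ _ hs /hs [s [c [all0 ->]]] nz.
rewrite coordf_sum big1_seq // => t /andP[_ ts].
rewrite coordf_e; case: eqP => [et|_]; last by rewrite mulr0.
by subst; move/seq.allP: all0 => /(_ _ ts) h; rewrite h in nz.
Qed.

Lemma J22 x y z : L0 (dv x (dv y z) + dv (dv x z) y + dv z (dv x y)).
Proof.
have -> : dv x (dv y z) + dv (dv x z) y + dv z (dv x y)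
        = vd z (vd y x) - dv z (vd y x).
  rewrite !dvE !(opNl bvd) !(opNr bvd) !opprK.
  by rewrite (leib z y x) subrK.
exact: L0_g1.
Qed.

Lemma J32 x y z : dv x (dv y z) + dv (dv x z) y + - dv (dv x y) z = 0.
Proof.
rewrite !dvE !(opNl bvd) !(opNr bvd) !opprK.
by rewrite (leib z y x) subrK subrr.
Qed.

Lemma J43 x y z : pp x (dv y z) + pp (dv x z) y + - dv (pp x y) z = 0.
Proof.
have h := ppder z x y.
rewrite !dvE !(opNl bpp) !(opNr bpp) !opprK (ppC x) opprK.
move/eqP: h; rewrite subr_eq0 subr_eq => /eqP ->.
by rewrite opprD addrA subrr sub0r addNr.
Qed.

Lemma J44 x y z : pp x (pp y z) + pp (pp x z) y + pp z (pp x y) = 0.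
Proof.
have h := ppjac x y z.
rewrite (ppC x (pp y z)) (ppC z (pp x y)) (ppC x z) (opNl bpp).
by rewrite -!opprD addrC addrA h oppr0.
Qed.

Notation letter := (Defs.letter X).
Notation word := (Defs.word X).
Notation P := (Defs.poly k X).
Notation S := (thm_set dv pp e X0).

Definition valL (A : letter) (dot : bool) (v : L) : L :=
  match A, dot with
  | inl x, false => dv (e x) v
  | inr x, false => dv (e x) v
  | inl x, true => - dv v (e x)
  | inr x, true => pp (e x) v
  end.
Definition valR (dot : bool) (v : L) (B : letter) : L :=
  match dot, B with
  | false, inl y => dv v (e y)
  | true, inl y => dv v (e y)
  | false, inr y => - dv (e y) v
  | true, inr y => pp v (e y)
  end.
Definition val (p q : letter) : L := valL p (isr q) (e (base q)).

Lemma valL_Ld A dot z : val A (Ld dot z) = valL A dot (e z).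
Proof. by case: dot. Qed.
Lemma valR_Ld dot z B : val (Ld dot z) B = valR dot (e z) B.
Proof. by case: dot; case: B. Qed.

Lemma valL_sum A dot (s : seq X) (c : X -> k) :
  valL A dot (\sum_(z <- s) c z *: e z) = \sum_(z <- s) c z *: valL A dot (e z).
Proof.
case: A => x; case: dot => /=; rewrite ?(op_sumr bdv) ?(op_sumr bpp) ?(op_suml bdv) //.
by rewrite -sumrN; apply: eq_bigr => z _; rewrite scalerN.
Qed.
Lemma valR_sum B dot (s : seq X) (c : X -> k) :
  valR dot (\sum_(z <- s) c z *: e z) B = \sum_(z <- s) c z *: valR dot (e z) B.
Proof.
case: B => x; case: dot => /=; rewrite ?(op_sumr bdv) ?(op_suml bpp) ?(op_suml bdv) //.
by rewrite -sumrN; apply: eq_bigr => z _; rewrite scalerN.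
Qed.

Definition okpair (p q : letter) : bool :=
  match p, q with
  | inl x, inl y => ~~ X0 x && ~~ X0 y
  | inr _, inl y => ~~ X0 y
  | inr _, inr _ => true
  | inl _, inr _ => false
  end.

Lemma S_intro p q c : letter_lt q p -> okpair p q -> coords e c (val p q) ->
  S (R p q (plin (isr p) c)).
Proof.
case: p => x; case: q => y //= hlt hok hc.
- by right; left; exists x, y, c; case/andP: hok => h1 h2; split.
- by right; right; left; exists x, y, c; split.
- by right; right; right; exists x, y, c; split.
Qed.

Lemma S_inv f : S f -> (exists x, X0 x /\ f = pword k [:: inl x]) \/
  exists p q c, [/\ letter_lt q p, okpair p q, coords e c (val p q) &
                   f = R p q (plin (isr p) c)].
Proof.
case=> [h|[|[|]]]; first by left.
- move=> [x [y [c [h1 h2 h3 h4 ->]]]]; right; exists (inl x), (inl y), c.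
  by split => //=; rewrite h1 h2.
- move=> [x [y [c [h1 h2 ->]]]]; right; exists (inr x), (inl y), c; by split.
- move=> [x [y [c [h1 h2 ->]]]]; right; exists (inr x), (inr y), c; by split.
Qed.

Lemma lead_w1 x : lead (pword k [:: @inl X X x]) [:: inl x] /\ pword k [:: @inl X X x] [:: inl x] = 1.
Proof.
split; last by rewrite /pword eqxx.
split; first by rewrite /pword eqxx oner_neq0.
move=> w'; rewrite /pword; have [->|ne] := eqVneq w' [:: inl x]; first by left.
by rewrite mulr0n eqxx.
Qed.

Lemma plin_size dot (c : X -> k) (w' : word) : size w' != 1%N -> plin dot c w' = 0.
Proof. by case: w' => [|[] z [|]] //=; case: dot. Qed.

Lemma lead_R p q dot (c : X -> k) : letter_lt q p ->
  lead (R p q (plin dot c)) [:: p; q] /\ R p q (plin dot c) [:: p; q] = 1.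
Proof.
move=> hlt.
have npq : p != q by apply/eqP => epq; subst; rewrite letter_ltxx in hlt.
have E : ([:: p; q] == [:: q; p]) = false.
  by rewrite eqseq_cons (negPf npq).
have V : R p q (plin dot c) [:: p; q] = 1.
  by rewrite /R /psub /pword eqxx E plin_size // subr0 subr0.
split => //; split; first by rewrite V oner_neq0.
move=> w'; case: (ltnP (size w') 2) => hs.
  by right; rewrite /wlt hs.
rewrite /R /psub /pword plin_size ?subr0; last by apply/eqP => h; rewrite h in hs.
have [->|n1] := eqVneq w' [:: p; q]; first by left.
have [->|n2] := eqVneq w' [:: q; p]; last by rewrite subrr eqxx.
by right; rewrite /wlt /= hlt.
Qed.

Section TM3.
Variable w : word.
Hypothesis hw : size w = 3%N.
Notation tm f := (trivial_mod S f w).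

Lemma tm_X0word x (u u' : word) : X0 x -> (size (u ++ [:: inl x] ++ u') < 3)%N ->
  tm (pword k (u ++ [:: inl x] ++ u')).
Proof.
move=> hx hs; apply: (tmE _ (tm1 (lf := [:: inl x]) (u := u) (u' := u') _ (lead_w1 x).1 _)).
- by move=> v; rewrite pmulw_word.
- by left; exists x.
- by rewrite /wlt hw hs.
Qed.

Lemma tm_R p q c : letter_lt q p -> okpair p q -> coords e c (val p q) ->
  tm (R p q (plin (isr p) c)).
Proof.
move=> h1 h2 h3.
apply: (tmE _ (tm1 (u := [::]) (u' := [::]) (S_intro h1 h2 h3) (lead_R _ _ h1).1 _)).
- by move=> v; rewrite pmulw_nil.
- by rewrite /wlt hw.
Qed.

Lemma tm_plin0 (c : X -> k) (s : seq X) : uniq s -> (forall z, z \notin s -> c z = 0) ->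
  (forall z, ~~ X0 z -> c z = 0) -> tm (plin false c).
Proof.
move=> us hout h1.
pose F z : P := if X0 z then pword k [:: inl z] else (fun _ => 0).
apply: (tmE _ (tm_sum s c (F := F) _)).
  move=> v; rewrite (plin_sum false v us hout); apply: eq_bigr => z _.
  rewrite /F; case: ifP => hz //=; by rewrite h1 ?hz // !mul0r.
move=> z; rewrite /F; case: ifP => hz; last exact: tm0.
exact: (@tm_X0word z [::] [::]).
Qed.

Lemma tm_coordL0 l : in_L0 vd dv pp l -> tm (plin false (coordf l)).
Proof.
move=> hl; have [s [us hs _]] := coordfP l.
by apply: (tm_plin0 us hs) => z; apply: L0_coord.
Qed.

Lemma plin_coordf0 dot v' v : v' = 0 -> plin dot (coordf v') v = 0.
Proof. by move=> ->; apply: plin0 => t; rewrite coordf0. Qed.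

End TM3.

Lemma plin_coordfD dot x y v :
  plin dot (coordf (x + y)) v = plin dot (coordf x) v + plin dot (coordf y) v.
Proof. by rewrite -plin_add; apply: plin_ext => t; rewrite coordfD. Qed.
Lemma plin_coordfN dot x v : plin dot (coordf (- x)) v = - plin dot (coordf x) v.
Proof. by rewrite -plin_opp; apply: plin_ext => t; rewrite coordfN. Qed.

Definition br (p q : letter) : P := fun v =>
  pword k [:: p; q] v - pword k [:: q; p] v - plin (isr p || isr q) (coordf (val p q)) v.

Section TM4.
Variable w : word.
Hypothesis hw : size w = 3%N.
Notation tm f := (trivial_mod S f w).

Lemma tm_w2 x (q : letter) : X0 x -> tm (pword k [:: inl x; q]) /\ tm (pword k [:: q; inl x]).
Proof.
move=> hx; split.
  by apply: (tmE _ (@tm_X0word w hw x [::] [:: q] hx _)).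
by apply: (tmE _ (@tm_X0word w hw x [:: q] [::] hx _)).
Qed.

Lemma tm_br_rl x y : tm (br (inr x) (inl y)).
Proof.
case: (boolP (X0 y)) => hy.
  have [_ t1] := tm_w2 (inr x) hy; have [t2 _] := tm_w2 (inr x) hy.
  apply: (tmE _ (tmB t1 t2)) => v; rewrite /br plin_coordf0 ?subr0 //.
  exact/dv_L0r/L0_e.
have := @tm_R w hw (inr x) (inl y) (coordf (val (inr x) (inl y))) isT hy (coordfP _).
by apply: tmE.
Qed.

Lemma tm_br_lr x y : tm (br (inl y) (inr x)).
Proof.
apply: (tmE _ (tmN (tm_br_rl x y))) => v.
rewrite /br /= plin_coordfN; ring.
Qed.

Lemma tm_br_ll a b : tm (br (inl a) (inl b)).
Proof.
case: (boolP (X0 a)) => ha.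
  have [t1 _] := tm_w2 (inl b) ha; have [_ t2] := tm_w2 (inl b) ha.
  apply: (tmE _ (tmB (tmB t1 t2) (tm_coordL0 hw (dv_L0l (e b) (L0_e ha))))) => v //.
case: (boolP (X0 b)) => hb.
  have [_ t1] := tm_w2 (inl a) hb; have [t2 _] := tm_w2 (inl a) hb.
  have h0 : in_L0 vd dv pp (dv (e a) (e b)) by rewrite dv_L0r; [exact: L0_0 | exact: L0_e].
  by apply: (tmE _ (tmB (tmB t1 t2) (tm_coordL0 hw h0))) => v.
case: (ltgtP a b) => hab.
- have t1 := @tm_R w hw (inl b) (inl a) (coordf (val (inl b) (inl a))) hab
     ltac:(by rewrite /= hb ha) (coordfP _).
  apply: (tmE _ (tmB (tmN t1) (tm_coordL0 hw (dv_sym (e a) (e b))))) => v.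
  rewrite plin_coordfD /br /R /psub /=; ring.
- have t1 := @tm_R w hw (inl a) (inl b) (coordf (val (inl a) (inl b))) hab
     ltac:(by rewrite /= hb ha) (coordfP _).
  by apply: tmE t1.
- subst; apply: (tmE _ (tmN (tm_coordL0 hw (dv_aa (e b))))) => v.
  by rewrite /br subrr sub0r.
Qed.

Lemma tm_br_rr a b : tm (br (inr a) (inr b)).
Proof.
case: (ltgtP a b) => hab.
- have t1 := @tm_R w hw (inr b) (inr a) (coordf (val (inr b) (inr a))) hab isT (coordfP _).
  apply: (tmE _ (tmN t1)) => v.
  rewrite /br /R /psub /= (ppC (e a)) plin_coordfN; ring.
- have t1 := @tm_R w hw (inr a) (inr b) (coordf (val (inr a) (inr b))) hab isT (coordfP _).
  by apply: tmE t1.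
- subst; apply: tm0' => v; rewrite /br subrr sub0r plin_coordf0 ?oppr0 //.
  exact: pp_aa.
Qed.

Lemma tm_br p q : tm (br p q).
Proof.
case: p => x; case: q => y.
- exact: tm_br_ll.
- exact: tm_br_lr.
- exact: tm_br_rl.
- exact: tm_br_rr.
Qed.

End TM4.

Section TM5.
Variable w : word.
Hypothesis hw : size w = 3%N.
Notation tm f := (trivial_mod S f w).

Lemma tm_resL A dot c vm : coords e c vm ->
  tm (fun v => pmulw [:: A] (plin dot c) [::] v - pmulw [::] (plin dot c) [:: A] v
               - plin (isr A || dot) (coordf (valL A dot vm)) v).
Proof.
move=> [s [us hout ev]].
have pl : plin dot c = (fun v => \sum_(z <- s) c z * pword k [:: Ld dot z] v).
  by apply: functional_extensionality => v; apply: plin_sum.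
apply: (tmE _ (tm_sum s c (F := fun z => br A (Ld dot z)) (fun z => tm_br hw _ _))) => v.
rewrite pl !pmulw_sum ev valL_sum.
rewrite (@plin_ext _ _ _ _ _ (fun t => \sum_(z <- s) c z * coordf (valL A dot (e z)) t));
  last by move=> t; rewrite coordf_sum.
rewrite plin_lin -!sumrB; apply: eq_bigr => z _.
rewrite !pmulw_word /br valL_Ld /=.
have -> : isr (Ld dot z) = dot by destruct dot.
ring.
Qed.

Lemma tm_resR B dot c vm : coords e c vm ->
  tm (fun v => pmulw [::] (plin dot c) [:: B] v - pmulw [:: B] (plin dot c) [::] v
               - plin (dot || isr B) (coordf (valR dot vm B)) v).
Proof.
move=> [s [us hout ev]].
have pl : plin dot c = (fun v => \sum_(z <- s) c z * pword k [:: Ld dot z] v).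
  by apply: functional_extensionality => v; apply: plin_sum.
apply: (tmE _ (tm_sum s c (F := fun z => br (Ld dot z) B) (fun z => tm_br hw _ _))) => v.
rewrite pl !pmulw_sum ev valR_sum.
rewrite (@plin_ext _ _ _ _ _ (fun t => \sum_(z <- s) c z * coordf (valR dot (e z) B) t));
  last by move=> t; rewrite coordf_sum.
rewrite plin_lin -!sumrB; apply: eq_bigr => z _.
rewrite !pmulw_word /br valR_Ld /=.
have -> : isr (Ld dot z) = dot by destruct dot.
ring.
Qed.

End TM5.

Lemma okpair_trans A B C : letter_lt B A -> letter_lt C B -> okpair A B -> okpair B C ->
  okpair A C.
Proof.
case: A => x; case: B => y; case: C => z //=.
- by move=> _ _ /andP[-> _] /andP[_ ->].
- by move=> _ _ _ /andP[_ ->].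
Qed.

Lemma isr_mono (p q : letter) : letter_lt q p -> isr q -> isr p.
Proof. by case: p => x; case: q. Qed.

Definition Vfin (A B C : letter) : L :=
  valL A (isr B) (val B C) + valR (isr A) (val A C) B + valL C (isr A) (val A B).

Lemma Vfin_ok A B C : letter_lt B A -> letter_lt C B ->
  if isr A then Vfin A B C = 0 else in_L0 vd dv pp (Vfin A B C).
Proof.
case: A => x; case: B => y; case: C => z //= _ _; rewrite /Vfin /=.
- exact: J22.
- exact: J32.
- exact: J43.
- exact: J44.
Qed.

Section TM6.
Variable w : word.
Hypothesis hw : size w = 3%N.
Notation tm f := (trivial_mod S f w).

Lemma tm_comp A B C cAB cBC : letter_lt B A -> letter_lt C B -> okpair A B -> okpair B C ->
  coords e cAB (val A B) -> coords e cBC (val B C) -> w = [:: A; B; C] ->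
  tm (psub (pmulw [::] (R A B (plin (isr A) cAB)) [:: C])
           (pmulw [:: A] (R B C (plin (isr B) cBC)) [::])).
Proof.
move=> hBA hCB okAB okBC cab cbc ew.
have hCA := letter_lt_trans hCB hBA.
have okAC := okpair_trans hBA hCB okAB okBC.
set mAC := plin (isr A) (coordf (val A C)).
have t1 : tm (pmulw [::] (R A C mAC) [:: B]).
  apply: tm1 (S_intro hCA okAC (coordfP _)) (lead_R _ _ hCA).1 _.
  by rewrite ew /wlt /= eqxx hCB /= orbT.
have t2 : tm (pmulw [:: C] (R A B (plin (isr A) cAB)) [::]).
  apply: tm1 (S_intro hBA okAB cab) (lead_R _ _ hBA).1 _.
  by rewrite ew /wlt /= hCA.
have t3 : tm (pmulw [:: B] (R A C mAC) [::]).
  apply: tm1 (S_intro hCA okAC (coordfP _)) (lead_R _ _ hCA).1 _.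
  by rewrite ew /wlt /= hBA.
have t4 : tm (pmulw [::] (R B C (plin (isr B) cBC)) [:: A]).
  apply: tm1 (S_intro hCB okBC cbc) (lead_R _ _ hCB).1 _.
  by rewrite ew /wlt /= hBA.
have r1 := tm_resL hw A (isr B) cbc.
have r2 := tm_resR hw B (isr A) (coordfP (val A C)).
have r3 := tm_resL hw C (isr A) cab.
have fin : tm (plin (isr A) (coordf (Vfin A B C))).
  have := Vfin_ok hBA hCB; case: (isr A) => h.
    by apply: tm0' => v; apply: plin_coordf0.
  exact: (@tm_coordL0 w hw _ h).
have dAB : (isr A || isr B) = isr A.
  by case hb2: (isr B); rewrite ?orbT ?orbF // (isr_mono hBA hb2).
have dCA : (isr C || isr A) = isr A.
  by case hc2: (isr C); rewrite ?orbF // (isr_mono hCA hc2).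
rewrite dAB in r1 r2; rewrite dCA in r3.
apply: (tmE _ (tmD (tmD (tmD (tmB (tmB (tmD t1 t2) t3) t4) r1) (tmD r2 r3)) fin)) => v.
rewrite (gen_identity A B C _ mAC) /Vfin !plin_coordfD /mAC.
ring.
Qed.
End TM6.

Lemma split2 (a b : word) x y : a != [::] -> b != [::] -> a ++ b = [:: x; y] ->
  a = [:: x] /\ b = [:: y].
Proof.
case: a => [|a1 [|a2 a']] //= _.
- by move=> _ [-> ->].
- case: b => [|b1 b'] //= _ [_ _]; by case: a'.
Qed.

Lemma nonempty_size (a : word) : a != [::] -> (0 < size a)%N.
Proof. by case: a. Qed.

Lemma main_GSB : is_GSB S.
Proof.
split.
  move=> f /S_inv [[x [hx ->]]|[p [q [c [hlt hok hc ->]]]]].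
  + by exists [:: inl x]; exact: lead_w1.
  + by exists [:: p; q]; exact: lead_R.
move=> f g wf wg Sf Sg lf lg.
case/S_inv: Sf lf => [[x [hx ->]]|[p [q [c [hlt hok hc ->]]]]] lf;
case/S_inv: Sg lg => [[x' [hx' ->]]|[p' [q' [c' [hlt' hok' hc' ->]]]]] lg.
- rewrite -(lead_uniq (lead_w1 x).1 lf) -(lead_uniq (lead_w1 x').1 lg).
  split.
    move=> u u' E; apply: tm0' => v; by rewrite /psub pmulw_word -E subrr.
  move=> a b c0 na nb nc ea _; have := congr1 size ea; rewrite size_cat /=.
  by have := nonempty_size na; have := nonempty_size nb; lia.
- rewrite -(lead_uniq (lead_w1 x).1 lf) -(lead_uniq (lead_R _ _ hlt').1 lg).
  split.
    by move=> u u' E; have := congr1 size E; rewrite !size_cat /=; lia.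
  move=> a b c0 na nb nc ea _; have := congr1 size ea; rewrite size_cat /=.
  by have := nonempty_size na; have := nonempty_size nb; lia.
- rewrite -(lead_uniq (lead_R _ _ hlt).1 lf) -(lead_uniq (lead_w1 x').1 lg).
  split.
    move=> u u' E.
    have : inl x' \in [:: p; q] by rewrite E !mem_cat inE eqxx orbT.
    rewrite !inE => /orP[/eqP ep|/eqP eq]; subst.
      by destruct q; rewrite /= ?hx' in hok.
    by destruct p; rewrite /= hx' ?andbF in hok.
  move=> a b c0 na nb nc _ eb; have := congr1 size eb; rewrite size_cat /=.
  by have := nonempty_size nc; have := nonempty_size nb; lia.
- rewrite -(lead_uniq (lead_R _ _ hlt).1 lf) -(lead_uniq (lead_R _ _ hlt').1 lg).
  split.
    move=> u u' E.
    have hu : u = [::].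
      by apply: size0nil; have := congr1 size E; rewrite !size_cat /=; lia.
    have hu' : u' = [::].
      by apply: size0nil; have := congr1 size E; rewrite !size_cat /=; lia.
    subst; move: E => /= -[ep eq]; subst.
    apply: tm0' => v; rewrite /psub pmulw_nil /R /psub.
    rewrite (@plin_ext _ _ _ _ c c' v); first by ring.
    exact: coords_uniq hc hc'.
  move=> a b c0 na nb nc ea eb.
  have [ea1 eb1] := split2 na nb (esym ea); subst.
  have [eb2 ec] := split2 nb nc (esym eb); case: eb2 => eq; subst.
  by apply: tm_comp.
Qed.

End Coords.

Theorem theorem5p3 (k : fieldType) (L : lmodType k) (vd dv pp : L -> L -> L)
  (d : Order.disp_t) (X : orderType d) (e : X -> L) (X0 : pred X) :
  (2%N \notin [pchar k]%R) ->
  is_lie_trialgebra vd dv pp ->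
  is_basis_of e (fun _ => True) predT ->
  is_basis_of e (in_L0 vd dv pp) X0 ->
  is_GSB (thm_set dv pp e X0).
Proof.
move=> hchar hlie hB hB0.
exact: (main_GSB hchar hlie hB hB0).
Qed.
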